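(* For all $a,b\in\mathbb{C}$ and integers $n\ge0$, $$\sum_{k=0}^n\binom{n}{k}a^kb^{n-k}H_k(3)=H_n(3)(a+b)^n-3\sum_{k=1}^n(a+b)^{n-k}b^k\,\frac{H_{k-1}^2-H_{k-1}^{(2)}-2H_{k-1}H_{n-k}+H_{n-k}^2-H_{n-k}^{(2)}}{k}.$$
   Context: $H_n=\sum_{k=1}^n\frac1k$ (with $H_0=0$) and $H_n^{(2)}=\sum_{k=1}^n\frac1{k^2}$. The multiple harmonic-like number $H_n(3)=\sum_{1\le k_1+k_2+k_3\le n}\frac{1}{k_1k_2k_3}$ (over positive integers $k_1,k_2,k_3$), with $H_0(3)=0$. Convention $0^0=1$. *)

(* Defs.v *)
(* Complex numbers are modelled as R[i] = complex R for R : realType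
   (mathcomp-analysis reals), i.e. the field C = R + iR with R the real numbers. *)
From HB Require Import structures.
From mathcomp Require Import all_boot all_order all_algebra.
From mathcomp Require Import complex.
From mathcomp Require Import reals.
Set Implicit Arguments. Unset Strict Implicit. Unset Printing Implicit Defensive.
Import Order.TTheory GRing.Theory Num.Theory.
Local Open Scope ring_scope.

Definition harm (F : fieldType) (n : nat) : F :=
  \sum_(1 <= k < n.+1) (k%:R)^-1.

Definition harm2 (F : fieldType) (n : nat) : F :=
  \sum_(1 <= k < n.+1) ((k%:R) ^+ 2)^-1.

Definition harm3 (F : fieldType) (n : nat) : F :=
  \sum_(1 <= k1 < n.+1) \sum_(1 <= k2 < n.+1) \sum_(1 <= k3 < n.+1 | (k1 + k2 + k3 <= n)%N)
     ((k1%:R) * (k2%:R) * (k3%:R))^-1.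

(* Main.v *)
Require Import Defs.
From HB Require Import structures.
From mathcomp Require Import all_boot all_order all_algebra.
From mathcomp Require Import complex reals.
From mathcomp Require Import ring lra zify.
Import Order.TTheory GRing.Theory Num.Theory.
Local Open Scope ring_scope.

Ltac nzs := repeat match goal with |- is_true (_ && _) => apply/andP; split end;
  rewrite ?nat1r -?natrD ?pnatr_eq0 -?lt0n ?bin_gt0 //; try lia.

Section H.
Variable F : numFieldType.
Local Notation H := (harm F).
Local Notation H2 := (harm2 F).
Definition X (M : nat) : F := H M ^+ 2 - H2 M.

Lemma nz (n : nat) : n.+1%:R != 0 :> F.
Proof. by rewrite pnatr_eq0. Qed.

Lemma harm0 : H 0 = 0. Proof. by rewrite /harm big_geq. Qed.
Lemma harm20 : H2 0 = 0. Proof. by rewrite /harm2 big_geq. Qed.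
Lemma harmS n : H n.+1 = H n + (n.+1%:R)^-1.
Proof. by rewrite /harm big_nat_recr. Qed.
Lemma harm2S n : H2 n.+1 = H2 n + (n.+1%:R ^+ 2)^-1.
Proof. by rewrite /harm2 big_nat_recr. Qed.
Lemma X0 : X 0 = 0. Proof. by rewrite /X harm0 harm20 expr0n subr0. Qed.
Lemma XS M : X M.+1 = X M + 2%:R * H M / M.+1%:R.
Proof. rewrite /X harmS harm2S; have h := nz M; field; by rewrite nat1r. Qed.

Lemma pf (y x m : F) : y + x = m -> y != 0 -> x != 0 -> m != 0 -> y^-1 / x = m^-1 * (y^-1 + x^-1).
Proof. move=> <- hy hx hm; by field; rewrite hy hx hm. Qed.

Lemma L0 M : \sum_(1 <= k < M.+1) ((M.+1 - k)%:R)^-1 / k%:R = 2%:R * H M / M.+1%:R.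
Proof.
have -> : \sum_(1 <= k < M.+1) ((M.+1 - k)%:R)^-1 / k%:R =
  (M.+1%:R)^-1 * (\sum_(1 <= k < M.+1) ((M.+1 - k)%:R)^-1 + H M).
  rewrite /harm -big_split big_distrr /=; apply: eq_big_nat => k /andP[k1 kM].
  apply: pf; rewrite ?pnatr_eq0 -?lt0n; try lia.
  by rewrite -natrD; congr (_%:R); lia.
have -> : \sum_(1 <= k < M.+1) ((M.+1 - k)%:R)^-1 = H M :> F.
  rewrite /harm (big_nat_rev _ _ 1) /=; apply: eq_big_nat => k /andP[k1 kM].
  by congr (_%:R^-1); lia.
have h := nz M; field; by rewrite nat1r.
Qed.

Lemma L1 M : \sum_(1 <= k < M.+1) H (M - k) / k%:R = X M.
Proof.
elim: M => [|M IH]; first by rewrite big_geq // X0.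
rewrite big_nat_recr //= subnn harm0 mul0r addr0.
rewrite (eq_big_nat _ _ (F2 := fun k => H (M-k)/k%:R + ((M.+1-k)%:R)^-1/k%:R)); last first.
  move=> k /andP[k1 kM]; rewrite subSn; last lia.
  by rewrite harmS mulrDl.
by rewrite big_split /= IH L0 XS.
Qed.

Lemma L2a N : \sum_(1 <= k < N.+1) H (k.-1) / k%:R = X N / 2%:R.
Proof.
elim: N => [|N IH]; first by rewrite big_geq // X0 mul0r.
rewrite big_nat_recr //= IH XS; have h := nz N; field; by rewrite ?nat1r.
Qed.

Lemma L2 N : \sum_(1 <= k < N.+1) H (N - k) / (N.+1 - k)%:R = X N / 2%:R.
Proof.
rewrite -L2a (big_nat_rev _ _ 1) /=; apply: eq_big_nat => k /andP[k1 kN].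
congr (H _ / _%:R); lia.
Qed.

Lemma L3 n : harm3 F n = \sum_(1 <= k < n.+1) X (n - k) / k%:R.
Proof.
rewrite /harm3; apply: eq_big_nat => k1 /andP[hk1 hk1n].
rewrite -L1 mulr_suml.
rewrite (big_cat_nat (n := (n - k1).+1)) /=; try lia.
rewrite [X in _ + X = _]big_nat_cond [X in _ + X = _]big1 ?addr0; last first.
  move=> k2 /andP[/andP[h1 h2] _]; rewrite big1 // => k3 h3; lia.
apply: eq_big_nat => k2 /andP[hk2 hk2n].
rewrite /harm !mulr_suml [RHS](big_nat_widen _ _ (n.+1)); last lia.
rewrite big_mkcond [RHS]big_mkcond /=.
apply: eq_big_nat => k3 /andP[hk3 hk3n].
have -> : (k1 + k2 + k3 <= n)%N = (k3 < (n - k1 - k2).+1)%N.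
  by apply/idP/idP => /=; lia.
case: ifP => // _.
have a1 : k1%:R != 0 :> F by rewrite pnatr_eq0 -lt0n.
have a2 : k2%:R != 0 :> F by rewrite pnatr_eq0 -lt0n.
have a3 : k3%:R != 0 :> F by rewrite pnatr_eq0 -lt0n.
by field; rewrite a1 a2 a3.
Qed.

Lemma LC N : N.+1%:R * (harm3 F N.+1 - harm3 F N) = 3%:R * X N.
Proof.
rewrite !L3 big_nat_recr //= subnn X0 mul0r addr0 -sumrB big_distrr /=.
rewrite (eq_big_nat _ _ (F2 := fun k => 2%:R * (H (N-k)/k%:R) + 2%:R * (H (N - k) / (N.+1 - k)%:R))); last first.
  move=> k /andP[k1 kN]; rewrite [(N.+1 - k)%N]subSn; last lia.
  rewrite XS -subSn; last lia.
  have hy : (N.+1 - k)%:R != 0 :> F by rewrite pnatr_eq0 -lt0n; lia.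
  have hx : k%:R != 0 :> F by rewrite pnatr_eq0 -lt0n.
  have hs : (N.+1 - k)%:R + k%:R = N.+1%:R :> F by rewrite -natrD; congr (_%:R); lia.
  move: hy hx hs; move: (N.+1 - k)%:R k%:R => y x hy hx <-.
  by field; rewrite hy hx.
rewrite big_split /= -!big_distrr /= L1 L2; by field.
Qed.



Fixpoint E (m j : nat) : F := match j with 0 => harm3 F m | j.+1 => E m j - E m.+1 j end.
Definition c (m j : nat) : F := (H j.-1 - H m) ^+ 2 - H2 j.-1 - H2 m.

Lemma LB j m : j.+1%:R * ('C(m + j.+1, j.+1))%:R * E m j.+1 = - 3%:R * c m j.+1.
Proof.
elim: j m => [|j IH] m.
  rewrite /= /c /= addn1 bin1 mul1r harm0 harm20 -opprB mulrN LC /X.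
  by rewrite sub0r sqrrN subr0 mulNr.
have IH1 := IH m; have IH2 := IH m.+1.
set K := ('C(m + j.+1, j.+1))%:R : F.
have hK : K != 0 by rewrite pnatr_eq0 -lt0n bin_gt0; lia.
have hP : j.+2%:R * ('C(m + j.+2, j.+2))%:R = (m.+1%:R + j.+1%:R) * K :> F.
  rewrite -natrM -natrD /K -natrM; congr (_%:R).
  have := mul_bin_diag (m + j.+2) j.+1; rewrite addnS /= => <-; congr (_ * _)%N; lia.
have hC2 : ('C(m.+1 + j.+1, j.+1))%:R = (m.+1%:R + j.+1%:R) * K / m.+1%:R :> F.
  have -> : (m.+1%:R + j.+1%:R) * K = m.+1%:R * ('C(m.+1 + j.+1, j.+1))%:R :> F.
    rewrite -natrM -natrD /K -natrM; congr (_%:R).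
    have := mul_bin_down (m + j.+2) j.+1; rewrite addnS /= => ->.
    rewrite addSn addnS; congr (_ * 'C(_, _))%N; lia.
  by field; rewrite nat1r nz.
change (E m j.+2) with (E m j.+1 - E m.+1 j.+1).
rewrite mulrBr hP.
rewrite hC2 in IH2.
have e1 : E m j.+1 = - 3%:R * c m j.+1 / (j.+1%:R * K).
  by rewrite -IH1; field; nzs.
have e2 : E m.+1 j.+1 = - 3%:R * c m.+1 j.+1 * m.+1%:R / (j.+1%:R * (m.+1%:R + j.+1%:R) * K).
  by rewrite -IH2; field; nzs.
rewrite e1 e2 /c /= !harmS !harm2S.
by field; nzs.
Qed.

Lemma binrec (w : nat -> F) n :
  \sum_(0 <= j < n.+2) ('C(n.+1, j))%:R * w j =
  \sum_(0 <= j < n.+1) ('C(n, j))%:R * w j + \sum_(0 <= j < n.+1) ('C(n, j))%:R * w j.+1.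
Proof.
rewrite big_nat_recl // bin0.
rewrite (eq_big_nat _ _ (F2 := fun i => ('C(n, i.+1))%:R * w i.+1 + ('C(n, i))%:R * w i.+1)); last first.
  by move=> i _; rewrite binS natrD mulrDl.
rewrite big_split /= addrA; congr (_ + _).
by rewrite [in RHS]big_nat_recl // bin0 big_nat_recr //= bin_small // mul0r addr0 ?mulr1n.
Qed.

Variables a b : F.
Definition G m n := \sum_(0 <= k < n.+1) ('C(n, k))%:R * a ^+ k * b ^+ (n - k) * harm3 F (m + k).

Lemma Grec m n : G m n.+1 = b * G m n + a * G m.+1 n.
Proof.
rewrite /G (eq_big_nat _ _ (F2 := fun k => ('C(n.+1, k))%:R * (a ^+ k * b ^+ (n.+1 - k) * harm3 F (m + k)))); last first.
  by move=> k _; rewrite !mulrA.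
rewrite binrec !big_distrr /=; congr (_ + _); apply: eq_big_nat => k /andP[_ hk].
  rewrite subSn; last lia.
  rewrite exprS; ring.
rewrite subSS exprS addnS addSn; ring.
Qed.

Lemma GA n m : G m n = \sum_(0 <= j < n.+1) ('C(n, j))%:R * (a + b) ^+ (n - j) * b ^+ j * E (m + n - j) j.
Proof.
elim: n m => [|n IH] m.
  by rewrite /G !big_nat1 /= !subn0 addn0 !expr0 !mulr1.
rewrite Grec.
have -> : b * G m n + a * G m.+1 n = (a + b) * G m.+1 n + b * (G m n - G m.+1 n) by ring.
rewrite !IH -sumrB !big_distrr /=.
rewrite [RHS](eq_big_nat _ _ (F2 := fun j => ('C(n.+1, j))%:R * ((a + b) ^+ (n.+1 - j) * b ^+ j * E (m + n.+1 - j) j))); last first.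
  by move=> k _; rewrite !mulrA.
rewrite binrec; congr (_ + _); apply: eq_big_nat => j /andP[_ hj].
  rewrite subSn; last lia.
  have -> : (m.+1 + n - j = m + n.+1 - j)%N by lia.
  rewrite exprS; ring.
rewrite subSS /= exprS.
have -> : (m + n.+1 - j.+1 = m + n - j)%N by lia.
have -> : (m.+1 + n - j = (m + n - j).+1)%N by lia.
ring.
Qed.
End H.

Theorem corollary5 (R : realType) (a b : R[i]) (n : nat) :
  \sum_(0 <= k < n.+1) ('C(n, k))%:R * a ^+ k * b ^+ (n - k) * harm3 _ k
  = harm3 _ n * (a + b) ^+ n
    - 3%:R * \sum_(1 <= k < n.+1) (a + b) ^+ (n - k) * b ^+ k *
        ((harm _ k.-1 ^+ 2 - harm2 _ k.-1 - 2%:R * harm _ k.-1 * harm _ (n - k)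
          + harm _ (n - k) ^+ 2 - harm2 _ (n - k)) / k%:R).
Proof.
have -> : \sum_(0 <= k < n.+1) ('C(n, k))%:R * a ^+ k * b ^+ (n - k) * harm3 _ k = G _ a b 0 n.
  by rewrite /G; apply: eq_big_nat => k _; rewrite add0n.
rewrite GA big_nat_recl // bin0 !subn0 expr0 add0n.
congr (_ + _); first by rewrite /= ?mulr1n mulr1 mul1r mulrC.
rewrite big_add1 succnK big_distrr -sumrN; apply: eq_big_nat => j /andP[_ hj].
have L := LB (R[i] : numFieldType) j (n - j.+1).
rewrite subnK in L; last lia.
set e := E _ (n - j.+1) j.+1 in L *.
have he : e = - 3%:R * c _ (n - j.+1) j.+1 / (j.+1%:R * ('C(n, j.+1))%:R).
  by rewrite -L; field; nzs.
rewrite he /c /=.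
by field; nzs.
Qed.
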